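(* Consider the deterministic dividend problem below with constants $k>0$, $\bar\mu>0$, $r>0$. For $\mu<0$ let $\tau_0(\mu)=\frac1k\ln\!\big(\frac{\bar\mu-\mu}{\bar\mu}\big)$ and $x_b(\mu)=-\bar\mu\,\tau_0(\mu)-\frac{\mu}{k}$; for $\mu\ge0$ let $\tau_0(\mu)=0$ and $x_b(\mu)=0$. Then: (a) for $\mu\ge0$ and $x\ge0$, $V(x,\mu)=x+\frac{\bar\mu}{r}+\frac{\mu-\bar\mu}{r+k}$, attained by paying $x$ at time $0$ and thereafter paying out earnings as they arrive ($L_t=x+\int_0^t\mu_s\,ds$); (b) for $\mu<0$: $V(x,\mu)=x$ if $x<x_b(\mu)$, and $V(x,\mu)=x+\max\{0,\;e^{-r\tau_0(\mu)}V(0,0)-x_b(\mu)\}$ if $x\ge x_b(\mu)$; (c) there exists $\mu^*<0$ such that $V(x,\mu)=x$ for all $x\ge0$ whenever $\mu\le\mu^*$ (immediate liquidation is optimal), while for $\mu\ge\mu^*$ and $x\ge x_b(\mu)$ it is optimal to pay $x-x_b(\mu)$ immediately and thereafter all earnings as they arrive, i.e. $L_t=x-x_b(\mu)+\int_{\tau_0(\mu)\wedge t}^t\mu_s\,ds$.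
   Context: Deterministic setting: the profitability is $\mu_t=\bar\mu+(\mu-\bar\mu)e^{-kt}$ (the solution of $d\mu_t=k(\bar\mu-\mu_t)dt$, $\mu_0=\mu\in\mathbb R$), and the cash reserves are $X_t=x+\int_0^t\mu_s\,ds-L_t$ for $x\ge0$, where an admissible dividend process $L$ is a deterministic càdlàg nondecreasing function with $L_{0-}=0$ and $\Delta L_t\le X_{t-}$. The bankruptcy time is $\theta(L)=\inf\{t>0:X_t<0\}$, and $V(x,\mu)=\sup_L\int_0^{\theta(L)}e^{-rt}\,dL_t$ (including a possible jump at time $0$). *)

(* Defs.v *)
From Stdlib Require Import Reals Lra List.
Open Scope R_scope.

Definition prof (k mubar mu t : R) : R := mubar + (mu - mubar) * exp (- k * t).

(* Cumulative earnings  I(t) = \int_0^t mu_s ds, written in closed form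
   (valid for k <> 0; see lemma cum_earn_deriv below). *)
Definition cum_earn (k mubar mu t : R) : R :=
  mubar * t + (mu - mubar) * (1 - exp (- k * t)) / k.

Lemma cum_earn_0 k mubar mu : cum_earn k mubar mu 0 = 0.
Proof. unfold cum_earn. replace (- k * 0) with 0 by ring. rewrite exp_0.
  unfold Rdiv. ring. Qed.

Lemma cum_earn_deriv k mubar mu t : k <> 0 ->
  derivable_pt_lim (cum_earn k mubar mu) t (prof k mubar mu t).
Proof.
  intros Hk.
  assert (H1 : derivable_pt_lim (fun t => - k * t) t (- k)).
  { pose proof (derivable_pt_lim_scal id (- k) t 1 (derivable_pt_lim_id t)) as H.
    unfold mult_real_fct, id in H. rewrite Rmult_1_r in H. exact H. }
  assert (Hg : derivable_pt_lim (fun t => exp (- k * t)) t (exp (- k * t) * (- k))).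
  { apply (derivable_pt_lim_comp (fun t => - k * t) exp t (- k) (exp (- k * t)) H1).
    apply derivable_pt_lim_exp. }
  assert (H2 : derivable_pt_lim (fun t => mubar * t) t mubar).
  { pose proof (derivable_pt_lim_scal id mubar t 1 (derivable_pt_lim_id t)) as H.
    unfold mult_real_fct, id in H. rewrite Rmult_1_r in H. exact H. }
  assert (H3 : derivable_pt_lim (fun t => (mu - mubar) * (1 - exp (- k * t)) / k) t
                 ((mu - mubar) * (0 - exp (- k * t) * (- k)) / k)).
  { pose proof (derivable_pt_lim_minus (fun _ => 1) (fun t => exp (- k * t)) t 0 _
                  (derivable_pt_lim_const 1 t) Hg) as H.
    pose proof (derivable_pt_lim_scal _ ((mu - mubar) / k) t _ H) as H'.
    unfold mult_real_fct, minus_fct in H'.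
    intros eps Heps. destruct (H' eps Heps) as [d Hd]. exists d. intros h Hh0 Hh.
    specialize (Hd h Hh0 Hh). unfold Rdiv in *.
    replace ((mu - mubar) * (1 - exp (- k * (t + h))) * / k - (mu - mubar) * (1 - exp (- k * t)) * / k)
      with ((mu - mubar) * / k * (1 - exp (- k * (t + h))) - (mu - mubar) * / k * (1 - exp (- k * t))) by ring.
    replace ((mu - mubar) * (0 - exp (- k * t) * - k) * / k)
      with ((mu - mubar) * / k * (0 - exp (- k * t) * - k)) by ring.
    exact Hd. }
  unfold cum_earn, prof.
  replace (mubar + (mu - mubar) * exp (- k * t)) with
    (mubar + (mu - mubar) * (0 - exp (- k * t) * (- k)) / k) by (field; auto).
  apply (derivable_pt_lim_plus (fun t => mubar * t) (fun t => (mu - mubar) * (1 - exp (- k * t)) / k)); assumption.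
Qed.

Definition reserves (k mubar x mu : R) (L : R -> R) (t : R) : R :=
  x + cum_earn k mubar mu t - L t.

Definition left_lim (f : R -> R) (t l : R) : Prop :=
  forall eps, 0 < eps -> exists delta, 0 < delta /\
    forall s, t - delta < s < t -> Rabs (f s - l) < eps.

(* t <= theta(L), where theta(L) = inf {t > 0 : X_t < 0} (possibly +infinity). *)
Definition not_after_ruin (k mubar x mu : R) (L : R -> R) (t : R) : Prop :=
  0 <= t /\ forall s, 0 < s < t -> 0 <= reserves k mubar x mu L s.

(* Admissible dividend strategies: deterministic, cadlag, nondecreasing,
   L_{0-} = 0, and Delta L_t <= X_{t-} (up to bankruptcy). *)
Definition admissible (k mubar x mu : R) (L : R -> R) : Prop :=
  (forall s t, 0 <= s <= t -> L s <= L t) /\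
  (forall t, 0 <= t -> forall eps, 0 < eps -> exists delta, 0 < delta /\
      forall s, t <= s < t + delta -> Rabs (L s - L t) < eps) /\
  0 <= L 0 /\                       (* Delta L_0 = L_0 - L_{0-} >= 0 *)
  L 0 <= x /\                       (* Delta L_0 <= X_{0-} = x *)
  (forall t, 0 < t -> not_after_ruin k mubar x mu L t ->
     forall lL lX, left_lim L t lL ->
       left_lim (reserves k mubar x mu L) t lX -> L t - lL <= lX).

Fixpoint incr_from (prev : R) (ts : list R) : Prop :=
  match ts with
  | nil => True
  | t :: ts' => prev < t /\ incr_from t ts'
  end.

(* Lower Stieltjes sum  sum_i e^{-r t_i} (L t_i - L t_{i-1}); since e^{-rt}
   is decreasing, e^{-r t_i} is its infimum on (t_{i-1}, t_i]. *)
Fixpoint stieltjes_sum (r : R) (L : R -> R) (prev : R) (ts : list R) : R :=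
  match ts with
  | nil => 0
  | t :: ts' => exp (- r * t) * (L t - L prev) + stieltjes_sum r L t ts'
  end.

(* s is a lower sum for \int_{[0,theta(L)]} e^{-rt} dL_t  (jump at 0 included,
   with weight e^0 = 1). *)
Definition dividend_lower_sum (k mubar r x mu : R) (L : R -> R) (s : R) : Prop :=
  exists ts, incr_from 0 ts /\ Forall (not_after_ruin k mubar x mu L) ts /\
    s = L 0 + stieltjes_sum r L 0 ts.

(* J is the value \int_0^{theta(L)} e^{-rt} dL_t of strategy L
   (Stieltjes integral = supremum of the lower sums). *)
Definition payoff_is (k mubar r x mu : R) (L : R -> R) (J : R) : Prop :=
  is_lub (dividend_lower_sum k mubar r x mu L) J.

Definition value_is (k mubar r x mu v : R) : Prop :=
  is_lub (fun s => exists L, admissible k mubar x mu L /\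
                             dividend_lower_sum k mubar r x mu L s) v.

Definition tau0 (k mubar mu : R) : R :=
  if Rlt_dec mu 0 then / k * ln ((mubar - mu) / mubar) else 0.

Definition xb (k mubar mu : R) : R :=
  if Rlt_dec mu 0 then - mubar * tau0 k mubar mu - mu / k else 0.

(* Main.v *)
Require Import Defs.
From Stdlib Require Import Reals Lra List Classical.
From Coquelicot Require Import Coquelicot.
Open Scope R_scope.


Definition Tl (k mb r mu a : R) : R :=
  exp (- r * a) * (mb / r + (mu - mb) * exp (- k * a) / (r + k)).

Lemma mono_deriv (f f' : R -> R) a b : a <= b ->
  (forall c, a <= c <= b -> derivable_pt_lim f c (f' c)) ->
  (forall c, a < c < b -> 0 <= f' c) -> f a <= f b.
Proof.
  intros Hab Hd Hp. destruct (Req_dec a b) as [->|Hne]; [lra|].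
  destruct (MVT_cor2 f f' a b) as [c [Hc1 Hc2]]; [lra|exact Hd|].
  specialize (Hp c Hc2). nra.
Qed.

Lemma Tl_deriv k mb r mu a : 0 < r -> 0 < k ->
  derivable_pt_lim (Tl k mb r mu) a (- exp (- r * a) * prof k mb mu a).
Proof.
  intros Hr Hk. apply is_derive_Reals. unfold Tl, prof.
  auto_derive; auto. field. lra.
Qed.

Lemma I_deriv k mb mu a : 0 < k ->
  derivable_pt_lim (cum_earn k mb mu) a (prof k mb mu a).
Proof. intros; apply cum_earn_deriv; lra. Qed.

Lemma tau0_neg k mb mu : mu < 0 -> tau0 k mb mu = / k * ln ((mb - mu) / mb).
Proof. intros H. unfold tau0. destruct (Rlt_dec mu 0); [reflexivity|lra]. Qed.
Lemma tau0_pos k mb mu : 0 <= mu -> tau0 k mb mu = 0.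
Proof. intros H. unfold tau0. destruct (Rlt_dec mu 0); [lra|reflexivity]. Qed.
Lemma xb_neg k mb mu : mu < 0 -> xb k mb mu = - mb * tau0 k mb mu - mu / k.
Proof. intros H. unfold xb. destruct (Rlt_dec mu 0); [reflexivity|lra]. Qed.
Lemma xb_pos k mb mu : 0 <= mu -> xb k mb mu = 0.
Proof. intros H. unfold xb. destruct (Rlt_dec mu 0); [lra|reflexivity]. Qed.

Lemma exp_ktau0 k mb mu : 0 < k -> 0 < mb -> mu < 0 ->
  exp (- k * tau0 k mb mu) = mb / (mb - mu).
Proof.
  intros Hk Hm Hmu. rewrite tau0_neg by lra.
  replace (- k * (/ k * ln ((mb - mu) / mb))) with (- ln ((mb - mu) / mb)) by (field; lra).
  rewrite exp_Ropp, exp_ln. field. split; lra.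
  apply Rdiv_lt_0_compat; lra.
Qed.

Lemma tau0_ge0 k mb mu : 0 < k -> 0 < mb -> 0 <= tau0 k mb mu.
Proof.
  intros Hk Hm. destruct (Rlt_dec mu 0) as [H|H].
  - rewrite tau0_neg by lra. apply Rmult_le_pos. left; apply Rinv_0_lt_compat; lra.
    rewrite <- ln_1. left. apply ln_increasing. lra.
    apply (Rmult_lt_reg_r mb); try lra. unfold Rdiv. rewrite Rmult_assoc, Rinv_l; lra.
  - rewrite tau0_pos; lra.
Qed.

Lemma tau0_gt0 k mb mu : 0 < k -> 0 < mb -> mu < 0 -> 0 < tau0 k mb mu.
Proof.
  intros Hk Hm Hmu. rewrite tau0_neg by lra. apply Rmult_lt_0_compat.
  apply Rinv_0_lt_compat; lra.
  rewrite <- ln_1. apply ln_increasing. lra.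
  apply (Rmult_lt_reg_r mb); try lra. unfold Rdiv. rewrite Rmult_assoc, Rinv_l; lra.
Qed.


Lemma exp_decr c a b : 0 <= c -> a <= b -> exp (- c * b) <= exp (- c * a).
Proof.
  intros Hc Hab. destruct (Req_dec (-c*b) (-c*a)) as [E|E]. rewrite E; lra.
  left. apply exp_increasing. nra.
Qed.

Lemma prof_nonneg k mb mu t : 0 < k -> 0 < mb -> tau0 k mb mu <= t -> 0 <= prof k mb mu t.
Proof.
  intros Hk Hm Ht. unfold prof. destruct (Rlt_dec mu 0) as [H|H].
  - pose proof (exp_decr k _ _ (Rlt_le _ _ Hk) Ht) as E. rewrite exp_ktau0 in E by lra.
    assert (E2 : exp (- k * t) * (mb - mu) <= mb).
    { apply (Rmult_le_compat_r (mb - mu)) in E; [|lra].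
      unfold Rdiv in E. rewrite Rmult_assoc, Rinv_l in E; lra. }
    nra.
  - rewrite tau0_pos in Ht by lra.
    pose proof (exp_decr k 0 t (Rlt_le _ _ Hk) Ht). replace (-k*0) with 0 in H0 by ring.
    rewrite exp_0 in H0. pose proof (exp_pos (-k*t)). nra.
Qed.

Lemma prof_nonpos k mb mu t : 0 < k -> 0 < mb -> mu < 0 -> t <= tau0 k mb mu -> prof k mb mu t <= 0.
Proof.
  intros Hk Hm Hmu Ht. unfold prof.
  pose proof (exp_decr k _ _ (Rlt_le _ _ Hk) Ht) as E. rewrite exp_ktau0 in E by lra.
  assert (E2 : mb <= exp (- k * t) * (mb - mu)).
  { apply (Rmult_le_compat_r (mb - mu)) in E; [|lra].
    unfold Rdiv in E. rewrite Rmult_assoc, Rinv_l in E; lra. }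
  nra.
Qed.

Lemma I_incr k mb mu a b : 0 < k -> 0 < mb -> tau0 k mb mu <= a -> a <= b ->
  cum_earn k mb mu a <= cum_earn k mb mu b.
Proof.
  intros Hk Hm Ha Hab. apply (mono_deriv _ (prof k mb mu)); auto.
  intros; apply I_deriv; lra. intros; apply prof_nonneg; lra.
Qed.

Lemma I_decr k mb mu a b : 0 < k -> 0 < mb -> mu < 0 -> a <= b -> b <= tau0 k mb mu ->
  cum_earn k mb mu b <= cum_earn k mb mu a.
Proof.
  intros Hk Hm Hmu Hab Hb.
  assert (H := mono_deriv (fun t => - cum_earn k mb mu t) (fun t => - prof k mb mu t) a b Hab).
  cbv beta in H. cut (- cum_earn k mb mu a <= - cum_earn k mb mu b). lra.
  apply H. intros. apply derivable_pt_lim_opp. apply I_deriv; lra.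
  intros. pose proof (prof_nonpos k mb mu c Hk Hm Hmu). lra.
Qed.

Lemma I_tau0 k mb mu : 0 < k -> 0 < mb -> cum_earn k mb mu (tau0 k mb mu) = - xb k mb mu.
Proof.
  intros Hk Hm. destruct (Rlt_dec mu 0) as [H|H].
  - rewrite xb_neg by lra. unfold cum_earn. rewrite exp_ktau0 by lra. field. split; lra.
  - rewrite xb_pos, tau0_pos by lra. rewrite cum_earn_0. ring.
Qed.

Lemma K2 k mb r mu a b : 0 < k -> 0 < mb -> 0 < r -> tau0 k mb mu <= a -> a <= b ->
  (cum_earn k mb mu b - cum_earn k mb mu a) * exp (- r * b) <= Tl k mb r mu a - Tl k mb r mu b.
Proof.
  intros Hk Hm Hr Ha Hab.
  set (h := fun b => Tl k mb r mu a - Tl k mb r mu b - (cum_earn k mb mu b - cum_earn k mb mu a) * exp (- r * b)).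
  assert (h a <= h b).
  { apply (mono_deriv h (fun c => r * exp (- r * c) * (cum_earn k mb mu c - cum_earn k mb mu a))); auto.
    - intros c Hc. apply is_derive_Reals. unfold h.
      unfold h, Tl, cum_earn. auto_derive; try (field; lra); repeat split; lra.
    - intros c Hc. pose proof (I_incr k mb mu a c Hk Hm Ha (Rlt_le _ _ (proj1 Hc))).
      pose proof (exp_pos (- r * c)). apply Rmult_le_pos; [apply Rmult_le_pos|]; lra. }
  unfold h in H. lra.
Qed.

Lemma K3 k mb r mu a b : 0 < k -> 0 < mb -> 0 < r -> tau0 k mb mu <= a -> a <= b ->
  Tl k mb r mu a - Tl k mb r mu b <= (cum_earn k mb mu b - cum_earn k mb mu a) * exp (- r * a).
Proof.
  intros Hk Hm Hr Ha Hab.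
  set (h := fun b => (cum_earn k mb mu b - cum_earn k mb mu a) * exp (- r * a) - Tl k mb r mu a + Tl k mb r mu b).
  assert (h a <= h b).
  { apply (mono_deriv h (fun c => prof k mb mu c * (exp (- r * a) - exp (- r * c)))); auto.
    - intros c Hc. apply is_derive_Reals.
      unfold h, Tl, cum_earn, prof. auto_derive; try (field; lra); repeat split; lra.
    - intros c Hc. apply Rmult_le_pos. apply prof_nonneg; lra.
      pose proof (exp_decr r a c (Rlt_le _ _ Hr) (Rlt_le _ _ (proj1 Hc))). lra. }
  unfold h in H. lra.
Qed.

Lemma Tl_nonneg k mb r mu a : 0 < k -> 0 < mb -> 0 < r -> tau0 k mb mu <= a -> 0 <= Tl k mb r mu a.
Proof.
  intros Hk Hm Hr Ha. pose proof (prof_nonneg k mb mu a Hk Hm Ha) as P. unfold prof in P.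
  unfold Tl. apply Rmult_le_pos. left; apply exp_pos.
  assert (mb / r + (mu - mb) * exp (- k * a) / (r + k) = (mb * k + r * (mb + (mu - mb) * exp (- k * a))) / (r * (r + k))) by (field; lra).
  rewrite H. apply Rmult_le_pos. nra. left. apply Rinv_0_lt_compat. nra.
Qed.

Lemma Tl_small k mb r mu a : 0 < k -> 0 < mb -> 0 < r -> 0 <= a ->
  Tl k mb r mu a <= (mb / r + Rabs (mu - mb) / (r + k)) / (1 + r * a).
Proof.
  intros Hk Hm Hr Ha. unfold Tl.
  assert (E1 : exp (- r * a) * (1 + r * a) <= 1).
  { pose proof (exp_ineq1_le (r * a)).
    assert (exp (- r * a) * exp (r * a) = 1) by (rewrite <- exp_plus; replace (- r * a + r * a) with 0 by ring; apply exp_0).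
    pose proof (exp_pos (- r * a)). nra. }
  assert (E2 : (mu - mb) * exp (- k * a) / (r + k) <= Rabs (mu - mb) / (r + k)).
  { unfold Rdiv. apply Rmult_le_compat_r. left; apply Rinv_0_lt_compat; lra.
    pose proof (exp_decr k 0 a (Rlt_le _ _ Hk) Ha). replace (-k*0) with 0 in H by ring.
    rewrite exp_0 in H. pose proof (exp_pos (-k*a)).
    destruct (Rle_dec 0 (mu - mb)). rewrite Rabs_right by lra. nra.
    pose proof (Rabs_pos (mu - mb)). nra. }
  assert (0 <= mb / r + Rabs (mu - mb) / (r + k)).
  { pose proof (Rabs_pos (mu - mb)). apply Rplus_le_le_0_compat; unfold Rdiv; apply Rmult_le_pos; try lra;
    left; apply Rinv_0_lt_compat; lra. }
  apply (Rmult_le_reg_r (1 + r * a)). nra.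
  replace ((mb / r + Rabs (mu - mb) / (r + k)) / (1 + r * a) * (1 + r * a)) with (mb / r + Rabs (mu - mb) / (r + k)) by (field; nra).
  pose proof (exp_pos (- r * a)).
  apply Rle_trans with (exp (- r * a) * (mb / r + Rabs (mu - mb) / (r + k)) * (1 + r * a)).
  apply Rmult_le_compat_r. nra. apply Rmult_le_compat_l; lra. nra.
Qed.

Lemma cont_eps f x : continuity_pt f x -> forall eps, 0 < eps ->
  exists d, 0 < d /\ forall y, Rabs (y - x) < d -> Rabs (f y - f x) < eps.
Proof.
  intros H eps He. destruct (H eps He) as [d [Hd Hd']]. exists d; split; [lra|].
  intros y Hy. destruct (Req_dec y x) as [->|Hne].
  - rewrite Rminus_diag, Rabs_R0; lra.
  - apply (Hd' y). split. split; [exact I| auto]. exact Hy.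
Qed.

Lemma I_cont k mb mu t : 0 < k -> forall eps, 0 < eps ->
  exists d, 0 < d /\ forall y, Rabs (y - t) < d ->
    Rabs (cum_earn k mb mu y - cum_earn k mb mu t) < eps.
Proof.
  intros Hk. apply cont_eps. apply derivable_continuous_pt.
  exists (prof k mb mu t). apply I_deriv; lra.
Qed.

Lemma nar_le k mb x mu L p q : not_after_ruin k mb x mu L q -> 0 <= p <= q ->
  not_after_ruin k mb x mu L p.
Proof. intros [H1 H2] Hp. split; [lra|]. intros s Hs. apply H2; lra. Qed.

Lemma mono_left_lim (L : R -> R) t : 0 < t ->
  (forall s u, 0 <= s <= u -> L s <= L u) ->
  exists l, left_lim L t l /\ l <= L t.
Proof.
  intros Ht Hm.
  set (E := fun y => exists s, 0 <= s < t /\ y = L s).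
  assert (HB : bound E). { exists (L t). intros y [s [Hs ->]]. apply Hm; lra. }
  assert (HE : exists y, E y). { exists (L 0). exists 0. split; [lra|auto]. }
  destruct (completeness E HB HE) as [l [Hub Hlub]].
  exists l. split.
  - intros eps He.
    assert (exists s, 0 <= s < t /\ l - eps < L s) as [s0 [Hs0 Hs0']].
    { apply NNPP. intros Hn. assert (l <= l - eps); [|lra].
      apply Hlub. intros y [s [Hs ->]]. apply Rnot_lt_le. intros Hc. apply Hn. exists s; auto. }
    exists (t - s0). split; [lra|]. intros s Hs.
    assert (L s0 <= L s) by (apply Hm; lra).
    assert (L s <= l) by (apply Hub; exists s; split; [lra|auto]).
    rewrite Rabs_left1 by lra. lra.
  - apply Hlub. intros y [s [Hs ->]]. apply Hm; lra.
Qed.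

Lemma adm_bound k mb x mu L p : 0 < k -> admissible k mb x mu L ->
  not_after_ruin k mb x mu L p -> L p <= x + cum_earn k mb mu p.
Proof.
  intros Hk [Hm [Hrc [HL0 [HL0x Hj]]]] Hn. destruct (proj1 Hn) as [Hp| <-].
  2: { rewrite cum_earn_0; lra. }
  destruct (mono_left_lim L p Hp Hm) as [lL [HlL _]].
  assert (HX : left_lim (reserves k mb x mu L) p (x + cum_earn k mb mu p - lL)).
  { intros eps He. destruct (HlL (eps/2)) as [d1 [Hd1 Hd1']]; [lra|].
    destruct (I_cont k mb mu p Hk (eps/2)) as [d2 [Hd2 Hd2']]; [lra|].
    exists (Rmin d1 d2). split. apply Rmin_pos; lra.
    intros s Hs. unfold reserves.
    assert (Hs1 : p - d1 < s < p). { pose proof (Rmin_l d1 d2). lra. }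
    assert (Hs2 : Rabs (s - p) < d2). { pose proof (Rmin_r d1 d2). rewrite Rabs_left; lra. }
    specialize (Hd1' s Hs1). specialize (Hd2' s Hs2).
    replace (x + cum_earn k mb mu s - L s - (x + cum_earn k mb mu p - lL)) with
      ((cum_earn k mb mu s - cum_earn k mb mu p) - (L s - lL)) by ring.
    eapply Rle_lt_trans. apply Rabs_triang. rewrite Rabs_Ropp. lra. }
  specialize (Hj p Hp Hn lL _ HlL HX). lra.
Qed.

Lemma adm_cont k mb x mu L :
  (forall s t, 0 <= s <= t -> L s <= L t) ->
  (forall t, 0 <= t -> forall eps, 0 < eps -> exists d, 0 < d /\
      forall s, 0 <= s -> Rabs (s - t) < d -> Rabs (L s - L t) < eps) ->
  0 <= L 0 -> L 0 <= x -> admissible k mb x mu L.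
Proof.
  intros Hm Hc H0 H0x. split; [exact Hm|]. split.
  { intros t Ht eps He. destruct (Hc t Ht eps He) as [d [Hd Hd']]. exists d. split; [lra|].
    intros s Hs. apply Hd'. lra. rewrite Rabs_right; lra. }
  split; [lra|]. split; [lra|].
  intros t Ht Hn lL lX HlL HlX.
  assert (lL = L t).
  { apply NNPP. intros Hne. set (eps := Rabs (lL - L t) / 2).
    assert (Heps : 0 < eps). { unfold eps. assert (lL - L t <> 0) by lra.
      pose proof (Rabs_pos_lt _ H). lra. }
    destruct (HlL eps Heps) as [d1 [Hd1 Hd1']].
    destruct (Hc t (Rlt_le _ _ Ht) eps Heps) as [d2 [Hd2 Hd2']].
    set (s := t - Rmin (Rmin d1 d2) t / 2).
    assert (0 < Rmin (Rmin d1 d2) t) by (repeat apply Rmin_pos; lra).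
    pose proof (Rmin_l (Rmin d1 d2) t). pose proof (Rmin_r (Rmin d1 d2) t).
    pose proof (Rmin_l d1 d2). pose proof (Rmin_r d1 d2).
    specialize (Hd1' s ltac:(unfold s; lra)).
    specialize (Hd2' s ltac:(unfold s; lra) ltac:(unfold s; rewrite Rabs_left; lra)).
    assert (Rabs (lL - L t) <= Rabs (L s - lL) + Rabs (L s - L t)).
    { replace (lL - L t) with (- (L s - lL) + (L s - L t)) by ring.
      eapply Rle_trans. apply Rabs_triang. rewrite Rabs_Ropp. lra. }
    unfold eps in *. lra. }
  assert (0 <= lX).
  { apply Rnot_lt_le. intros Hneg. destruct (HlX (- lX)) as [d [Hd Hd']]; [lra|].
    set (s := t - Rmin d t / 2).
    assert (0 < Rmin d t) by (apply Rmin_pos; lra).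
    pose proof (Rmin_l d t). pose proof (Rmin_r d t).
    specialize (Hd' s ltac:(unfold s; lra)).
    assert (0 <= reserves k mb x mu L s) by (apply (proj2 Hn); unfold s; lra).
    assert (reserves k mb x mu L s - lX <= Rabs (reserves k mb x mu L s - lX)) by apply Rle_abs.
    lra. }
  lra.
Qed.

Definition Fx k mb x mu t := x + cum_earn k mb mu t.
Definition Gf k mb r x mu a :=
  exp (- r * a) * Fx k mb x mu (Rmax a (tau0 k mb mu)) + Tl k mb r mu (Rmax a (tau0 k mb mu)).

Lemma incr_in prev ts p : incr_from prev ts -> In p ts -> prev < p.
Proof.
  revert prev. induction ts as [|t ts IH]; simpl; intros prev H Hin; [tauto|].
  destruct H as [H1 H2]. destruct Hin as [<-|Hin]; [lra|]. specialize (IH t H2 Hin). lra.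
Qed.

Lemma ub_ind k mb r x mu (L : R -> R) : 0 < k -> 0 < mb -> 0 < r ->
  forall ts prev, 0 <= prev -> incr_from prev ts ->
  (forall p, p = prev \/ In p ts -> L p <= Fx k mb x mu (Rmax p (tau0 k mb mu))) ->
  exp (- r * prev) * L prev + stieltjes_sum r L prev ts <= Gf k mb r x mu prev.
Proof.
  intros Hk Hm Hr. induction ts as [|t ts IH]; intros prev Hp Hinc HL; simpl.
  - unfold Gf. rewrite Rplus_0_r.
    pose proof (Tl_nonneg k mb r mu (Rmax prev (tau0 k mb mu)) Hk Hm Hr (Rmax_r _ _)).
    pose proof (HL prev (or_introl eq_refl)). pose proof (exp_pos (- r * prev)). nra.
  - destruct Hinc as [Hpt Hinc].
    assert (IHt := IH t ltac:(lra) Hinc ltac:(intros p [->|Hin]; apply HL; simpl; auto)).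
    assert (Hw : exp (- r * t) <= exp (- r * prev)) by (apply exp_decr; lra).
    assert (HLp := HL prev (or_introl eq_refl)).
    set (t0 := tau0 k mb mu) in *.
    assert (Key : Fx k mb x mu (Rmax prev t0) * (exp (- r * prev) - exp (- r * t)) <=
                  Gf k mb r x mu prev - Gf k mb r x mu t).
    { unfold Gf. fold t0. destruct (Rle_dec t t0) as [Ht|Ht].
      - rewrite (Rmax_right t t0 Ht), (Rmax_right prev t0) by lra. lra.
      - rewrite (Rmax_left t t0) by lra.
        assert (Hp' : Rmax prev t0 <= t) by (apply Rmax_lub; lra).
        pose proof (K2 k mb r mu (Rmax prev t0) t Hk Hm Hr (Rmax_r _ _) Hp').
        unfold Fx. nra. }
    assert (L prev * (exp (- r * prev) - exp (- r * t)) <=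
            Fx k mb x mu (Rmax prev t0) * (exp (- r * prev) - exp (- r * t))).
    { apply Rmult_le_compat_r; lra. }
    nra.
Qed.

Lemma ub_const r (L : R -> R) c : 0 < r ->
  forall ts prev, incr_from prev ts ->
  (forall p, p = prev \/ In p ts -> L p <= c) ->
  exp (- r * prev) * L prev + stieltjes_sum r L prev ts <= c * exp (- r * prev).
Proof.
  intros Hr. induction ts as [|t ts IH]; intros prev Hinc HL; simpl.
  - pose proof (HL prev (or_introl eq_refl)). pose proof (exp_pos (- r * prev)). nra.
  - destruct Hinc as [Hpt Hinc].
    assert (IHt := IH t Hinc ltac:(intros p [->|Hin]; apply HL; simpl; auto)).
    assert (Hw : exp (- r * t) <= exp (- r * prev)) by (apply exp_decr; lra).
    pose proof (HL prev (or_introl eq_refl)). nra.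
Qed.

Lemma I_nonpos k mb mu p : 0 < k -> 0 < mb -> 0 <= p <= tau0 k mb mu -> cum_earn k mb mu p <= 0.
Proof.
  intros Hk Hm Hp. destruct (Rlt_dec mu 0) as [H|H].
  - pose proof (I_decr k mb mu 0 p Hk Hm H (proj1 Hp) (proj2 Hp)). rewrite cum_earn_0 in H0. lra.
  - rewrite tau0_pos in Hp by lra. replace p with 0 by lra. rewrite cum_earn_0; lra.
Qed.

Lemma ub_main k mb r x mu L s : 0 < k -> 0 < mb -> 0 < r ->
  admissible k mb x mu L -> dividend_lower_sum k mb r x mu L s ->
  s <= x \/ (0 <= Fx k mb x mu (tau0 k mb mu) /\ s <= Gf k mb r x mu 0).
Proof.
  intros Hk Hm Hr Hadm [ts [Hinc [Hall ->]]].
  pose proof Hadm as [Hmon [_ [HL0 [HL0x _]]]].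
  rewrite Forall_forall in Hall.
  assert (Hnar : forall p, p = 0 \/ In p ts -> not_after_ruin k mb x mu L p).
  { intros p [->|Hin]. split; [lra|intros; lra]. auto. }
  assert (Hge : forall p, p = 0 \/ In p ts -> 0 <= p).
  { intros p Hp. exact (proj1 (Hnar p Hp)). }
  set (t0 := tau0 k mb mu).
  assert (Ht0 : 0 <= t0) by (apply tau0_ge0; lra).
  destruct (classic (exists q, In q ts /\ t0 < q)) as [[q [Hq Hq']]|Hno].
  - right.
    assert (Hn0 : not_after_ruin k mb x mu L t0) by (apply (nar_le _ _ _ _ _ _ q); auto; lra).
    assert (HLt0 : L t0 <= Fx k mb x mu t0) by (apply adm_bound; auto).
    split. { pose proof (Hmon 0 t0 ltac:(lra)). lra. }
    replace (L 0 + stieltjes_sum r L 0 ts) with (exp (- r * 0) * L 0 + stieltjes_sum r L 0 ts)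
      by (replace (- r * 0) with 0 by ring; rewrite exp_0; ring).
    apply ub_ind; auto. all: try lra.
    intros p Hp. pose proof (Hge p Hp). destruct (Rle_dec t0 p) as [Hc0|Hc0].
    + fold t0. rewrite Rmax_left by lra. apply adm_bound; auto.
    + fold t0. rewrite Rmax_right by lra. pose proof (Hmon p t0 ltac:(lra)). fold t0. lra.
  - left.
    replace (L 0 + stieltjes_sum r L 0 ts) with (exp (- r * 0) * L 0 + stieltjes_sum r L 0 ts)
      by (replace (- r * 0) with 0 by ring; rewrite exp_0; ring).
    eapply Rle_trans. apply (ub_const r L x Hr ts 0 Hinc).
    2: { replace (- r * 0) with 0 by ring; rewrite exp_0; lra. }
    intros p Hp. pose proof (Hge p Hp).
    assert (p <= t0). { destruct Hp as [->|Hp]; [lra|]. apply Rnot_lt_le. intros Hc. apply Hno. exists p; auto. }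
    pose proof (adm_bound k mb x mu L p Hk Hadm (Hnar p Hp)).
    pose proof (I_nonpos k mb mu p Hk Hm ltac:(fold t0; split; lra)). lra.
Qed.

Lemma Rmax_lip a b c : Rabs (Rmax a c - Rmax b c) <= Rabs (a - b).
Proof. unfold Rmax. repeat destruct Rle_dec; unfold Rabs; repeat destruct Rcase_abs; lra. Qed.


Lemma lstar_adm k mb x mu L : 0 < k -> 0 < mb ->
  (forall t, 0 <= t -> L t = Fx k mb x mu (Rmax t (tau0 k mb mu))) ->
  0 <= Fx k mb x mu (tau0 k mb mu) -> admissible k mb x mu L.
Proof.
  intros Hk Hm HL H0. pose proof (tau0_ge0 k mb mu Hk Hm) as Ht0.
  apply adm_cont.
  - intros s t Hst. rewrite !HL by lra. unfold Fx. apply Rplus_le_compat_l.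
    apply I_incr; auto. apply Rmax_r. unfold Rmax. repeat destruct Rle_dec; lra.
  - intros t Ht eps He. destruct (I_cont k mb mu (Rmax t (tau0 k mb mu)) Hk eps He) as [d [Hd Hd']].
    exists d. split; auto. intros s Hs Hst. rewrite !HL by lra. unfold Fx.
    replace (x + cum_earn k mb mu (Rmax s (tau0 k mb mu)) - (x + cum_earn k mb mu (Rmax t (tau0 k mb mu))))
      with (cum_earn k mb mu (Rmax s (tau0 k mb mu)) - cum_earn k mb mu (Rmax t (tau0 k mb mu))) by ring.
    apply Hd'. pose proof (Rmax_lip s t (tau0 k mb mu)). lra.
  - rewrite HL by lra. rewrite Rmax_right by lra. exact H0.
  - rewrite HL by lra. rewrite Rmax_right by lra. unfold Fx.
    pose proof (I_nonpos k mb mu (tau0 k mb mu) Hk Hm ltac:(lra)). lra.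
Qed.

Lemma lstar_nar k mb x mu L t : 0 < k -> 0 < mb ->
  (forall t, 0 <= t -> L t = Fx k mb x mu (Rmax t (tau0 k mb mu))) ->
  0 <= t -> not_after_ruin k mb x mu L t.
Proof.
  intros Hk Hm HL Ht. split; auto. intros s Hs. unfold reserves. rewrite HL by lra. unfold Fx.
  destruct (Rle_dec (tau0 k mb mu) s) as [H|H].
  - rewrite Rmax_left by lra. lra.
  - rewrite Rmax_right by lra. destruct (Rlt_dec mu 0) as [Hmu|Hmu].
    + pose proof (I_decr k mb mu s (tau0 k mb mu) Hk Hm Hmu ltac:(lra) ltac:(lra)). lra.
    + rewrite tau0_pos in H by lra. lra.
Qed.

Fixpoint grid (a h : R) (n : nat) : list R :=
  match n with O => nil | S n' => (a + h) :: grid (a + h) h n' end.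

Lemma grid_incr h n : 0 < h -> forall a p, p <= a -> incr_from p (grid a h n).
Proof. intros Hh. induction n as [|n IH]; intros a p Hp; simpl; auto. split; [lra|]. apply IH; lra. Qed.

Lemma grid_in h n : 0 < h -> forall a q, In q (grid a h n) -> a < q.
Proof.
  intros Hh. induction n as [|n IH]; intros a q Hq; simpl in Hq; [tauto|].
  destruct Hq as [<-|Hq]; [lra|]. specialize (IH _ _ Hq). lra.
Qed.

Lemma step_lb k mb r x mu L p h : 0 < k -> 0 < mb -> 0 < r -> 0 < h -> 0 <= p ->
  (forall t, 0 <= t -> L t = Fx k mb x mu (Rmax t (tau0 k mb mu))) ->
  let p' := Rmax p (tau0 k mb mu) in let t := p' + h in
  Gf k mb r x mu p - Gf k mb r x mu t - L p * (exp (- r * p) - exp (- r * t)) <=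
  (1 - exp (- r * h)) * (Fx k mb x mu t - Fx k mb x mu p').
Proof.
  intros Hk Hm Hr Hh Hp HL p' t.
  assert (Hp' : tau0 k mb mu <= p') by apply Rmax_r.
  assert (Hp0 : 0 <= p') by (pose proof (Rmax_l p (tau0 k mb mu)); unfold p' in *; lra).
  unfold Gf. rewrite (Rmax_left t) by (unfold t; lra). fold p'. rewrite HL by lra. fold p'.
  pose proof (K3 k mb r mu p' t Hk Hm Hr Hp' ltac:(unfold t; lra)) as K.
  pose proof (I_incr k mb mu p' t Hk Hm Hp' ltac:(unfold t; lra)) as Inc.
  assert (Ew : exp (- r * t) = exp (- r * p') * exp (- r * h)) by (rewrite <- exp_plus; unfold t; f_equal; ring).
  assert (Hw1 : exp (- r * p') <= 1).
  { pose proof (exp_decr r 0 p' (Rlt_le _ _ Hr) Hp0). replace (- r * 0) with 0 in H by ring. rewrite exp_0 in H. lra. }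
  assert (Hwh : exp (- r * h) <= 1).
  { pose proof (exp_decr r 0 h (Rlt_le _ _ Hr) (Rlt_le _ _ Hh)). replace (- r * 0) with 0 in H by ring. rewrite exp_0 in H. lra. }
  pose proof (exp_pos (- r * p')).
  unfold Fx in *.
  assert ((cum_earn k mb mu t - cum_earn k mb mu p') * (exp (- r * p') * (1 - exp (- r * h))) <=
          (cum_earn k mb mu t - cum_earn k mb mu p') * (1 - exp (- r * h))).
  { apply Rmult_le_compat_l. lra. nra. }
  rewrite Ew. nra.
Qed.

Lemma lb_ind k mb r x mu L h : 0 < k -> 0 < mb -> 0 < r -> 0 < h ->
  (forall t, 0 <= t -> L t = Fx k mb x mu (Rmax t (tau0 k mb mu))) ->
  forall n p, 0 <= p ->
  Gf k mb r x mu p - (exp (- r * p) * L p + stieltjes_sum r L p (grid (Rmax p (tau0 k mb mu)) h n)) <=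
  (1 - exp (- r * h)) * (Fx k mb x mu (Rmax p (tau0 k mb mu) + INR n * h) - Fx k mb x mu (Rmax p (tau0 k mb mu)))
  + Tl k mb r mu (Rmax p (tau0 k mb mu) + INR n * h).
Proof.
  intros Hk Hm Hr Hh HL. induction n as [|n IH]; intros p Hp.
  - simpl. replace (Rmax p (tau0 k mb mu) + 0 * h) with (Rmax p (tau0 k mb mu)) by ring.
    unfold Gf. rewrite HL by lra. lra.
  - set (p' := Rmax p (tau0 k mb mu)). simpl grid. simpl stieltjes_sum.
    assert (Hp' : tau0 k mb mu <= p') by apply Rmax_r.
    assert (Hp0 : 0 <= p') by (pose proof (Rmax_l p (tau0 k mb mu)); unfold p' in *; lra).
    set (t := p' + h).
    specialize (IH t ltac:(unfold t; lra)).
    rewrite (Rmax_left t) in IH by (unfold t; lra).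
    pose proof (step_lb k mb r x mu L p h Hk Hm Hr Hh Hp HL) as St. cbv zeta in St. fold p' t in St.
    rewrite S_INR.
    replace (p' + (INR n + 1) * h) with (t + INR n * h) by (unfold t; ring).
    assert (0 <= 1 - exp (- r * h)).
    { pose proof (exp_decr r 0 h (Rlt_le _ _ Hr) (Rlt_le _ _ Hh)). replace (- r * 0) with 0 in H by ring. rewrite exp_0 in H. lra. }
    nra.
Qed.

Lemma I_lip k mb mu a b : 0 < k -> 0 <= a -> a <= b ->
  cum_earn k mb mu b - cum_earn k mb mu a <= (mb + Rabs (mu - mb)) * (b - a).
Proof.
  intros Hk Ha Hab.
  pose proof (mono_deriv (fun t => (mb + Rabs (mu - mb)) * t - cum_earn k mb mu t)
     (fun t => (mb + Rabs (mu - mb)) - prof k mb mu t) a b Hab) as H.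
  cbv beta in H. cut ((mb + Rabs (mu - mb)) * a - cum_earn k mb mu a <= (mb + Rabs (mu - mb)) * b - cum_earn k mb mu b). lra.
  apply H.
  - intros c Hc. apply derivable_pt_lim_minus. 2: apply I_deriv; lra.
    pose proof (derivable_pt_lim_scal id (mb + Rabs (mu - mb)) c 1 (derivable_pt_lim_id c)) as D.
    unfold mult_real_fct, id in D. rewrite Rmult_1_r in D. exact D.
  - intros c Hc. unfold prof.
    pose proof (exp_decr k 0 c (Rlt_le _ _ Hk) ltac:(lra)). replace (- k * 0) with 0 in H0 by ring.
    rewrite exp_0 in H0. pose proof (exp_pos (- k * c)).
    destruct (Rle_dec 0 (mu - mb)). rewrite Rabs_right by lra. nra.
    rewrite Rabs_left by lra. nra.
Qed.

Lemma div_le C q e : 0 < q -> C <= e * q -> C / q <= e.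
Proof. intros Hq H. apply (Rmult_le_reg_r q); auto. unfold Rdiv. rewrite Rmult_assoc, Rinv_l; lra. Qed.

Lemma lstar_approach k mb r x mu L : 0 < k -> 0 < mb -> 0 < r ->
  (forall t, 0 <= t -> L t = Fx k mb x mu (Rmax t (tau0 k mb mu))) ->
  forall eps, 0 < eps -> exists s, dividend_lower_sum k mb r x mu L s /\ Gf k mb r x mu 0 - eps < s.
Proof.
  intros Hk Hm Hr HL eps He.
  set (t0 := tau0 k mb mu). assert (Ht0 : 0 <= t0) by (apply tau0_ge0; lra).
  set (M := mb + Rabs (mu - mb)). assert (HM : 0 <= M) by (pose proof (Rabs_pos (mu - mb)); unfold M; lra).
  set (C := mb / r + Rabs (mu - mb) / (r + k)).
  assert (HC : 0 <= C).
  { pose proof (Rabs_pos (mu - mb)). apply Rplus_le_le_0_compat; unfold Rdiv; apply Rmult_le_pos; try lra;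
    left; apply Rinv_0_lt_compat; lra. }
  set (D := 2 * C / (r * eps) + 1).
  assert (HD : 1 <= D). { unfold D. assert (0 <= 2 * C / (r * eps)). unfold Rdiv. apply Rmult_le_pos. lra.
    left. apply Rinv_0_lt_compat. nra. lra. }
  destruct (INR_unbounded (2 * r * M * D * D / eps)) as [n Hn].
  assert (Hn0 : 0 < INR n). { assert (0 <= 2 * r * M * D * D / eps). unfold Rdiv.
    apply Rmult_le_pos. repeat apply Rmult_le_pos; lra. left; apply Rinv_0_lt_compat; lra. lra. }
  set (h := D / INR n). assert (Hh : 0 < h) by (unfold h; apply Rdiv_lt_0_compat; lra).
  assert (HnhD : INR n * h = D) by (unfold h; field; lra).
  exists (L 0 + stieltjes_sum r L 0 (grid t0 h n)). split.
  - exists (grid t0 h n). split. apply grid_incr; auto.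
    split; [|reflexivity]. apply Forall_forall. intros q Hq. apply (lstar_nar _ _ _ _ _ _ Hk Hm HL).
    pose proof (grid_in h n Hh _ _ Hq). fold t0 in H. lra.
  - pose proof (lb_ind k mb r x mu L h Hk Hm Hr Hh HL n 0 ltac:(lra)) as B.
    rewrite Rmax_right in B by (fold t0; lra). fold t0 in B. rewrite HnhD in B.
    replace (- r * 0) with 0 in B by ring. rewrite exp_0, Rmult_1_l in B.
    assert (E1 : (1 - exp (- r * h)) * (Fx k mb x mu (t0 + D) - Fx k mb x mu t0) < eps / 2).
    { assert (Hc : 0 <= 1 - exp (- r * h) <= r * h).
      { pose proof (exp_ineq1_le (- r * h)). pose proof (exp_decr r 0 h (Rlt_le _ _ Hr) (Rlt_le _ _ Hh)).
        replace (- r * 0) with 0 in H0 by ring. rewrite exp_0 in H0. lra. }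
      assert (Hf : 0 <= Fx k mb x mu (t0 + D) - Fx k mb x mu t0 <= M * D).
      { unfold Fx. pose proof (I_lip k mb mu t0 (t0 + D) Hk Ht0 ltac:(lra)). fold M in H.
        pose proof (I_incr k mb mu t0 (t0 + D) Hk Hm ltac:(unfold t0; lra) ltac:(lra)). split; nra. }
      apply Rle_lt_trans with ((r * h) * (M * D)). apply Rmult_le_compat; lra.
      replace (r * h * (M * D)) with (r * M * D * D / INR n) by (unfold h; field; lra).
      apply (Rmult_lt_reg_r (INR n)); auto. unfold Rdiv. rewrite Rmult_assoc, Rinv_l by lra.
      apply (Rmult_lt_reg_r (/ eps)). apply Rinv_0_lt_compat; lra.
      replace (eps * / 2 * INR n * / eps) with (INR n / 2) by (field; lra).
      replace (r * M * D * D * 1 * / eps) with ((2 * r * M * D * D / eps) / 2) by (field; lra). lra. }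
    assert (E2 : Tl k mb r mu (t0 + D) <= eps / 2).
    { eapply Rle_trans. apply Tl_small; auto. lra. fold C. apply div_le. nra.
      unfold D. assert (r * eps * (2 * C / (r * eps)) = 2 * C) by (field; nra).
      set (X := 2 * C / (r * eps)) in *. assert (0 <= eps * r * t0) by (apply Rmult_le_pos; nra).
      assert (0 <= eps * r) by nra. nra. }
    lra.
Qed.

Lemma lub_intro (S : R -> Prop) v : (forall s, S s -> s <= v) ->
  (forall eps, 0 < eps -> exists s, S s /\ v - eps < s) -> is_lub S v.
Proof.
  intros Hub Happ. split; [exact Hub|]. intros b Hb. apply Rnot_lt_le. intros Hlt.
  destruct (Happ (v - b)) as [s [Hs Hs']]; [lra|]. specialize (Hb s Hs). lra.
Qed.

Lemma const_adm k mb x mu : 0 <= x -> admissible k mb x mu (fun _ => x).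
Proof.
  intros Hx. apply adm_cont; try lra. intros; lra.
  intros t Ht eps He. exists 1. split; [lra|]. intros. rewrite Rminus_diag, Rabs_R0; lra.
Qed.

Lemma const_sum k mb r x mu : dividend_lower_sum k mb r x mu (fun _ => x) x.
Proof. exists nil. simpl. split; [auto|]. split; [constructor|ring]. Qed.

Lemma value_V1 k mb r x mu : 0 < k -> 0 < mb -> 0 < r -> 0 <= x ->
  0 <= Fx k mb x mu (tau0 k mb mu) -> value_is k mb r x mu (Rmax x (Gf k mb r x mu 0)).
Proof.
  intros Hk Hm Hr Hx H0. apply lub_intro.
  - intros s [L [Hadm Hs]]. destruct (ub_main k mb r x mu L s Hk Hm Hr Hadm Hs) as [H|[_ H]].
    pose proof (Rmax_l x (Gf k mb r x mu 0)); lra. pose proof (Rmax_r x (Gf k mb r x mu 0)); lra.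
  - intros eps He. destruct (Rle_dec (Gf k mb r x mu 0) x) as [Hle|Hlt].
    + exists x. split. exists (fun _ => x). split. apply const_adm; auto. apply const_sum.
      rewrite Rmax_left by lra. lra.
    + set (L := fun t => Fx k mb x mu (Rmax t (tau0 k mb mu))).
      assert (HL : forall t, 0 <= t -> L t = Fx k mb x mu (Rmax t (tau0 k mb mu))) by reflexivity.
      destruct (lstar_approach k mb r x mu L Hk Hm Hr HL eps He) as [s [Hs Hs']].
      exists s. split. exists L. split; auto. apply lstar_adm; auto.
      rewrite Rmax_right by lra. lra.
Qed.

Lemma value_V2 k mb r x mu : 0 < k -> 0 < mb -> 0 < r -> 0 <= x ->
  Fx k mb x mu (tau0 k mb mu) < 0 -> value_is k mb r x mu x.
Proof.
  intros Hk Hm Hr Hx H0. apply lub_intro.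
  - intros s [L [Hadm Hs]]. destruct (ub_main k mb r x mu L s Hk Hm Hr Hadm Hs) as [H|[H _]]; lra.
  - intros eps He. exists x. split. exists (fun _ => x). split. apply const_adm; auto. apply const_sum. lra.
Qed.

Lemma payoff_lstar k mb r x mu L : 0 < k -> 0 < mb -> 0 < r ->
  (forall t, 0 <= t -> L t = Fx k mb x mu (Rmax t (tau0 k mb mu))) ->
  0 <= Fx k mb x mu (tau0 k mb mu) -> x <= Gf k mb r x mu 0 ->
  payoff_is k mb r x mu L (Gf k mb r x mu 0).
Proof.
  intros Hk Hm Hr HL H0 Hx. apply lub_intro.
  - intros s Hs. destruct (ub_main k mb r x mu L s Hk Hm Hr (lstar_adm k mb x mu L Hk Hm HL H0) Hs) as [H|[_ H]]; lra.
  - apply lstar_approach; auto.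
Qed.

Lemma Gf0 k mb r x mu : 0 < k -> 0 < mb ->
  Gf k mb r x mu 0 = Fx k mb x mu (tau0 k mb mu) + Tl k mb r mu (tau0 k mb mu).
Proof.
  intros Hk Hm. unfold Gf. rewrite Rmax_right by (apply tau0_ge0; lra).
  replace (- r * 0) with 0 by ring. rewrite exp_0. ring.
Qed.

Lemma Tl_tau0_neg k mb r mu : 0 < k -> 0 < mb -> 0 < r -> mu < 0 ->
  Tl k mb r mu (tau0 k mb mu) = exp (- r * tau0 k mb mu) * (mb / r + (0 - mb) / (r + k)).
Proof.
  intros Hk Hm Hr Hmu. unfold Tl. rewrite exp_ktau0 by lra. f_equal. field. lra.
Qed.

Definition V0 k mb r := mb / r + (0 - mb) / (r + k).
Definition psi k mb r t := exp (- r * t) * V0 k mb r + mb * t + mb * (1 - exp (k * t)) / k.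

Lemma V0_pos k mb r : 0 < k -> 0 < mb -> 0 < r -> 0 < V0 k mb r.
Proof.
  intros. unfold V0. replace (mb / r + (0 - mb) / (r + k)) with (mb * k / (r * (r + k))) by (field; lra).
  apply Rdiv_lt_0_compat; nra.
Qed.

Lemma exp_ktau0' k mb mu : 0 < k -> 0 < mb -> mu < 0 -> exp (k * tau0 k mb mu) = (mb - mu) / mb.
Proof.
  intros. replace (k * tau0 k mb mu) with (- (- k * tau0 k mb mu)) by ring.
  rewrite exp_Ropp, exp_ktau0 by lra. field. lra.
Qed.

Lemma phi_psi k mb r mu : 0 < k -> 0 < mb -> 0 < r -> mu < 0 ->
  Tl k mb r mu (tau0 k mb mu) - xb k mb mu = psi k mb r (tau0 k mb mu).
Proof.
  intros. rewrite Tl_tau0_neg by lra. rewrite xb_neg by lra. unfold psi, V0.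
  rewrite exp_ktau0' by lra. field. lra.
Qed.

Lemma psi_decr k mb r a b : 0 < k -> 0 < mb -> 0 < r -> 0 <= a -> a <= b -> psi k mb r b <= psi k mb r a.
Proof.
  intros Hk Hm Hr Ha Hab. unfold psi.
  pose proof (exp_decr r a b (Rlt_le _ _ Hr) Hab). pose proof (V0_pos k mb r Hk Hm Hr).
  assert (E : exp (k * b) = exp (k * a) * exp (k * (b - a))) by (rewrite <- exp_plus; f_equal; ring).
  pose proof (exp_ineq1_le (k * (b - a))). pose proof (exp_ineq1_le (k * a)).
  assert (Hd : 0 <= k * (b - a)) by nra. assert (Ha1 : 1 <= exp (k * a)) by nra.
  assert (exp (k * b) - exp (k * a) >= k * (b - a)).
  { rewrite E. assert (exp (k * a) * (exp (k * (b - a)) - 1) >= 1 * (k * (b - a))).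
    apply Rle_ge, Rmult_le_compat; lra. nra. }
  assert (mb * (b - a) <= mb * (exp (k * b) - exp (k * a)) / k).
  { apply (Rmult_le_reg_r k); auto. replace (mb * (exp (k * b) - exp (k * a)) / k * k) with (mb * (exp (k * b) - exp (k * a))) by (field; lra). nra. }
  assert (mb * (1 - exp (k * b)) / k = mb * (1 - exp (k * a)) / k - mb * (exp (k * b) - exp (k * a)) / k) by (field; lra).
  nra.
Qed.

Lemma psi_cont k mb r : 0 < k -> continuity (psi k mb r).
Proof.
  intros Hk x. apply derivable_continuous_pt.
  exists (- r * exp (- r * x) * V0 k mb r + mb - mb * k * exp (k * x) / k).
  apply is_derive_Reals. unfold psi. auto_derive; auto. field. lra.
Qed.

Lemma psi_neg k mb r : 0 < k -> 0 < mb -> 0 < r -> exists t, 0 < t /\ psi k mb r t < 0.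
Proof.
  intros Hk Hm Hr. pose proof (V0_pos k mb r Hk Hm Hr). set (v := V0 k mb r) in *.
  set (t := 1 + 4 * v / (mb * k)). exists t.
  assert (Hq : 4 * v / (mb * k) * (mb * k) = 4 * v) by (field; nra).
  assert (Hq0 : 0 < 4 * v / (mb * k)) by (apply Rdiv_lt_0_compat; nra).
  split. unfold t; lra. unfold psi. fold v.
  assert (E : exp (k * t) = exp (k * t / 2) * exp (k * t / 2)) by (rewrite <- exp_plus; f_equal; field).
  pose proof (exp_ineq1_le (k * t / 2)).
  assert (exp (k * t) >= 1 + k * t + k * k * t * t / 4) by (assert (0 <= k * t) by (unfold t; nra); nra).
  assert (mb * (1 - exp (k * t)) / k <= - mb * t - mb * k * t * t / 4).
  { apply (Rmult_le_reg_r k); auto. replace (mb * (1 - exp (k * t)) / k * k) with (mb * (1 - exp (k * t))) by (field; lra). nra. }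
  assert (exp (- r * t) <= 1).
  { pose proof (exp_decr r 0 t (Rlt_le _ _ Hr) ltac:(unfold t; lra)). replace (- r * 0) with 0 in H3 by ring. rewrite exp_0 in H3. lra. }
  assert (mb * k * t * t / 4 > v).
  { assert (t * t >= t) by (unfold t; nra). assert (mb * k * t > 4 * v) by (unfold t; nra). nra. }
  nra.
Qed.

Lemma tau0_mono k mb a b : 0 < k -> 0 < mb -> a <= b -> b < 0 -> tau0 k mb b <= tau0 k mb a.
Proof.
  intros Hk Hm Hab Hb. rewrite !tau0_neg by lra. apply Rmult_le_compat_l. left; apply Rinv_0_lt_compat; lra.
  destruct (Req_dec a b) as [->|Hne]; [lra|]. left. apply ln_increasing. apply Rdiv_lt_0_compat; lra.
  unfold Rdiv. apply Rmult_lt_compat_r. apply Rinv_0_lt_compat; lra. lra.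
Qed.

Lemma mustar_ex k mb r : 0 < k -> 0 < mb -> 0 < r ->
  exists ms, ms < 0 /\ (forall mu, mu < 0 -> mu <= ms -> psi k mb r (tau0 k mb mu) <= 0) /\
    (forall mu, mu < 0 -> ms <= mu -> 0 <= psi k mb r (tau0 k mb mu)).
Proof.
  intros Hk Hm Hr. destruct (psi_neg k mb r Hk Hm Hr) as [t1 [Ht1 Hp1]].
  assert (Hc : continuity (fun t => - psi k mb r t)) by (apply continuity_opp, psi_cont; lra).
  assert (H0 : psi k mb r 0 = V0 k mb r).
  { unfold psi. replace (- r * 0) with 0 by ring. replace (k * 0) with 0 by ring. rewrite exp_0. field. lra. }
  pose proof (V0_pos k mb r Hk Hm Hr).
  destruct (IVT _ 0 t1 Hc Ht1 ltac:(lra) ltac:(lra)) as [ts [[Hts1 Hts2] Hz]].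
  assert (Hts : 0 < ts). { destruct Hts1 as [|<-]; auto. lra. }
  set (ms := mb * (1 - exp (k * ts))).
  assert (He : 1 < exp (k * ts)) by (pose proof (exp_ineq1 (k * ts)); assert (k * ts <> 0) by nra; pose proof (H1 H2); nra).
  assert (Hms : ms < 0) by (unfold ms; nra).
  assert (Hmt : tau0 k mb ms = ts).
  { rewrite tau0_neg by lra. replace ((mb - ms) / mb) with (exp (k * ts)) by (unfold ms; field; lra).
    rewrite ln_exp. field. lra. }
  exists ms. split; auto. split.
  - intros mu Hmu Hle. pose proof (tau0_mono k mb mu ms Hk Hm Hle Hms). rewrite Hmt in H1.
    pose proof (psi_decr k mb r ts (tau0 k mb mu) Hk Hm Hr ltac:(lra) H1). lra.
  - intros mu Hmu Hle. pose proof (tau0_mono k mb ms mu Hk Hm Hle Hmu). rewrite Hmt in H1.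
    pose proof (psi_decr k mb r (tau0 k mb mu) ts Hk Hm Hr (tau0_ge0 k mb mu Hk Hm) H1). lra.
Qed.

Lemma G0_eq k mb r x mu : 0 < k -> 0 < mb -> 0 < r ->
  Gf k mb r x mu 0 = x - xb k mb mu + Tl k mb r mu (tau0 k mb mu).
Proof. intros. rewrite Gf0 by lra. unfold Fx. rewrite I_tau0 by lra. ring. Qed.

Theorem theorem5p1 (k mubar r : R) (hk : 0 < k) (hmubar : 0 < mubar) (hr : 0 < r) :
  (* (a) *)
  (forall mu x, 0 <= mu -> 0 <= x ->
     value_is k mubar r x mu (x + mubar / r + (mu - mubar) / (r + k)) /\
     admissible k mubar x mu (fun t => x + cum_earn k mubar mu t) /\
     payoff_is k mubar r x mu (fun t => x + cum_earn k mubar mu t)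
       (x + mubar / r + (mu - mubar) / (r + k))) /\
  (* (b) *)
  (forall mu x v00, mu < 0 -> 0 <= x -> value_is k mubar r 0 0 v00 ->
     (x < xb k mubar mu -> value_is k mubar r x mu x) /\
     (xb k mubar mu <= x ->
        value_is k mubar r x mu
          (x + Rmax 0 (exp (- r * tau0 k mubar mu) * v00 - xb k mubar mu)))) /\
  (* (c) *)
  (exists mustar, mustar < 0 /\
     (forall mu x, mu <= mustar -> 0 <= x -> value_is k mubar r x mu x) /\
     (forall mu x, mustar <= mu -> 0 <= x -> xb k mubar mu <= x ->
        let Lopt := fun t => x - xb k mubar mu + cum_earn k mubar mu t
                             - cum_earn k mubar mu (Rmin (tau0 k mubar mu) t) in
        admissible k mubar x mu Lopt /\
        exists v, value_is k mubar r x mu v /\ payoff_is k mubar r x mu Lopt v)).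
Proof.
  assert (Gpos : forall mu x, 0 <= mu -> Gf k mubar r x mu 0 = x + mubar / r + (mu - mubar) / (r + k)).
  { intros mu x Hmu. rewrite G0_eq by lra. rewrite xb_pos, tau0_pos by lra. unfold Tl.
    replace (- r * 0) with 0 by ring. replace (- k * 0) with 0 by ring. rewrite exp_0. field. lra. }
  assert (Tlpos : forall mu, 0 <= mu -> 0 <= Tl k mubar r mu (tau0 k mubar mu)).
  { intros mu Hmu. apply Tl_nonneg; lra. }
  assert (PA : forall mu x, 0 <= mu -> 0 <= x ->
     value_is k mubar r x mu (x + mubar / r + (mu - mubar) / (r + k)) /\
     admissible k mubar x mu (fun t => x + cum_earn k mubar mu t) /\
     payoff_is k mubar r x mu (fun t => x + cum_earn k mubar mu t)
       (x + mubar / r + (mu - mubar) / (r + k))).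
  { intros mu x Hmu Hx. rewrite <- (Gpos mu x Hmu).
    assert (Hx0 : 0 <= Fx k mubar x mu (tau0 k mubar mu)).
    { unfold Fx. rewrite tau0_pos, cum_earn_0 by lra. lra. }
    assert (HL : forall t, 0 <= t -> x + cum_earn k mubar mu t = Fx k mubar x mu (Rmax t (tau0 k mubar mu))).
    { intros t Ht. rewrite tau0_pos by lra. rewrite Rmax_left by lra. reflexivity. }
    assert (HG : x <= Gf k mubar r x mu 0).
    { rewrite G0_eq by lra. rewrite xb_pos by lra. pose proof (Tlpos mu Hmu). lra. }
    split; [|split].
    - rewrite <- (Rmax_right x (Gf k mubar r x mu 0)) by lra. apply value_V1; auto.
    - apply lstar_adm; auto.
    - apply payoff_lstar; auto. }
  split; [exact PA|]. split.
  - intros mu x v00 Hmu Hx Hv.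
    assert (Hv0 : v00 = V0 k mubar r).
    { apply (is_lub_u _ _ _ Hv). pose proof (proj1 (PA 0 0 ltac:(lra) ltac:(lra))).
      unfold V0. replace (mubar / r + (0 - mubar) / (r + k)) with (0 + mubar / r + (0 - mubar) / (r + k)) by ring.
      exact H. }
    split.
    + intros Hlt. apply value_V2; auto. unfold Fx. rewrite I_tau0 by lra. lra.
    + intros Hle. assert (Hx0 : 0 <= Fx k mubar x mu (tau0 k mubar mu)) by (unfold Fx; rewrite I_tau0 by lra; lra).
      pose proof (value_V1 k mubar r x mu hk hmubar hr Hx Hx0) as V.
      rewrite G0_eq, Tl_tau0_neg in V by lra. fold (V0 k mubar r) in V. rewrite <- Hv0 in V.
      replace (x + Rmax 0 (exp (- r * tau0 k mubar mu) * v00 - xb k mubar mu)) with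
        (Rmax x (x - xb k mubar mu + exp (- r * tau0 k mubar mu) * v00)); auto.
      unfold Rmax. repeat destruct Rle_dec; lra.
  - destruct (mustar_ex k mubar r hk hmubar hr) as [ms [Hms [Hlo Hhi]]].
    exists ms. split; auto. split.
    + intros mu x Hmu Hx. destruct (Rlt_dec x (xb k mubar mu)) as [Hlt|Hge].
      * apply value_V2; auto. unfold Fx. rewrite I_tau0 by lra. lra.
      * assert (Hx0 : 0 <= Fx k mubar x mu (tau0 k mubar mu)) by (unfold Fx; rewrite I_tau0 by lra; lra).
        pose proof (value_V1 k mubar r x mu hk hmubar hr Hx Hx0) as V.
        rewrite G0_eq in V by lra.
        pose proof (phi_psi k mubar r mu hk hmubar hr ltac:(lra)). pose proof (Hlo mu ltac:(lra) Hmu).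
        rewrite Rmax_left in V by lra. exact V.
    + intros mu x Hmu Hx Hxb Lopt.
      set (t0 := tau0 k mubar mu).
      assert (HL : forall t, 0 <= t -> Lopt t = Fx k mubar x mu (Rmax t t0)).
      { intros t Ht. unfold Lopt, Fx. fold t0. pose proof (I_tau0 k mubar mu hk hmubar). fold t0 in H.
        destruct (Rle_dec t t0) as [H1|H1].
        - rewrite Rmin_right, Rmax_right by lra. lra.
        - rewrite Rmin_left, Rmax_left by lra. lra. }
      assert (Hx0 : 0 <= Fx k mubar x mu t0) by (unfold Fx, t0; rewrite I_tau0 by lra; lra).
      assert (HG : x <= Gf k mubar r x mu 0).
      { rewrite G0_eq by lra. destruct (Rlt_dec mu 0) as [Hn|Hp].
        - pose proof (phi_psi k mubar r mu hk hmubar hr Hn). pose proof (Hhi mu Hn Hmu). lra.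
        - rewrite xb_pos by lra. pose proof (Tlpos mu ltac:(lra)). lra. }
      split. apply lstar_adm; auto.
      exists (Gf k mubar r x mu 0). split.
      * rewrite <- (Rmax_right x (Gf k mubar r x mu 0)) by lra. apply value_V1; auto.
      * apply payoff_lstar; auto.
Qed.
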